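(* Suppose $g(K_a,K_b)<(a-1)(b-1)$ for some positive integers $a$ and $b$. Then there is a constant $\beta<1$ such that $g(n)\le \beta n^2$ for all $n$.
   Context: $K_m$ is the complete graph on $m$ vertices. A complete bipartite subgraph of a graph $G$ has two disjoint nonempty vertex classes $X,Y$ and edge set all $xy$ with $x\in X,y\in Y$ (all edges of $G$). For graphs $G,H$, a block is a set $E(B_1)\times E(B_2)$ where $B_1$ is a complete bipartite subgraph of $G$ and $B_2$ is a complete bipartite subgraph of $H$; $g(G,H)$ is the minimum number of blocks whose union is $E(G)\times E(H)$ with the blocks pairwise disjoint, and $g(n)=g(K_n,K_n)$. *)

(* Defs.v *)
From mathcomp Require Import all_boot all_order all_algebra.
Set Implicit Arguments. Unset Strict Implicit. Unset Printing Implicit Defensive.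

(* A simple graph: a vertex finType V with a symmetric irreflexive relation e.
   Its edges are the 2-element sets {x,y} with e x y. *)
Definition edges (V : finType) (e : rel V) : {set {set V}} :=
  [set [set x; y] | x in V, y in V & e x y].

Definition Krel (m : nat) : rel 'I_m := fun x y => x != y.

Definition is_cbs (V : finType) (e : rel V) (XY : {set V} * {set V}) : bool :=
  [&& XY.1 :&: XY.2 == set0, XY.1 != set0, XY.2 != set0 &
      [forall x in XY.1, forall y in XY.2, e x y]].

Definition cbs_edges (V : finType) (XY : {set V} * {set V}) : {set {set V}} :=
  [set [set x; y] | x in XY.1, y in XY.2].

Definition block (V W : finType) (B : ({set V} * {set V}) * ({set W} * {set W}))
  : {set {set V} * {set W}} :=
  setX (cbs_edges B.1) (cbs_edges B.2).

Definition decomp (V W : finType) (eV : rel V) (eW : rel W) (k : nat) : bool :=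
  [exists f : {ffun 'I_k -> ({set V} * {set V}) * ({set W} * {set W})},
    [&& [forall i, is_cbs eV (f i).1 && is_cbs eW (f i).2],
        [forall i, forall j, (i != j) ==> (block (f i) :&: block (f j) == set0)] &
        \bigcup_i block (f i) == setX (edges eV) (edges eW)]].

(* Decompositions into
   #E(G)*#E(H) blocks (single edge pairs, K_{1,1} x K_{1,1}) always exist,
   so searching k in [0, #E(G)*#E(H)] finds the true minimum. *)
Definition gGH (V W : finType) (eV : rel V) (eW : rel W) : nat :=
  find (decomp eV eW) (iota 0 (#|edges eV| * #|edges eW|).+1).

Definition gK (a b : nat) : nat := gGH (@Krel a) (@Krel b).
Definition g (n : nat) : nat := gK n n.

(* Main.v *)
Require Import Defs.
From mathcomp Require Import all_boot all_order all_algebra.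
From mathcomp Require Import zify.
Set Implicit Arguments. Unset Strict Implicit. Unset Printing Implicit Defensive.

Definition bc (V : finType) := ({set V} * {set V})%type.
Definition inb (V : finType) (B : bc V) (u v : V) : bool :=
  ((u \in B.1) && (v \in B.2)) || ((v \in B.1) && (u \in B.2)).
Definition neq (V : finType) : rel V := fun x y => x != y.
Definition vbc (V : finType) (B : bc V) := is_cbs (@neq V) B.

Lemma set2_eq (V : finType) (u v x y : V) :
  [set u; v] = [set x; y] -> (u = x /\ v = y) \/ (u = y /\ v = x).
Proof.
move=> E.
have hu : u \in [set x; y] by rewrite -E set21.
have hv : v \in [set x; y] by rewrite -E set22.
have hx : x \in [set u; v] by rewrite E set21.
have hy : y \in [set u; v] by rewrite E set22.
case/set2P: hu => ?; case/set2P: hv => ?; subst; auto.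
- by move/set2P: hy => [?|?]; subst; auto.
- by move/set2P: hx => [?|?]; subst; auto.
Qed.

Lemma mem_cbs (V : finType) (X Y : {set V}) (u v : V) :
  ([set u; v] \in cbs_edges (X, Y)) = inb (X, Y) u v.
Proof.
rewrite /cbs_edges /inb /=; apply/imset2P/idP.
- case=> x y /= hx hy /set2_eq [[-> ->]|[-> ->]].
  + by rewrite hx hy.
  + by rewrite hx hy orbT.
- case/orP => /andP [hu hv].
  + by exists u v.
  + by exists v u => //; rewrite setUC.
Qed.

Lemma cbs_edgesP (V : finType) (B : bc V) (P : {set V}) :
  P \in cbs_edges B -> exists u v, P = [set u; v] /\ inb B u v.
Proof.
case: B => X Y /imset2P [x y hx hy ->]; exists x, y; split=> //.
by rewrite /inb hx hy.
Qed.

Lemma mem_edges (V : finType) (u v : V) :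
  ([set u; v] \in edges (@neq V)) = (u != v).
Proof.
rewrite /edges; apply/imset2P/idP.
- case=> x y _; rewrite inE /neq => hxy /set2_eq [[-> ->]|[-> ->]] //.
  by rewrite eq_sym.
- by move=> h; exists u v => //; rewrite inE.
Qed.

Lemma edgesP (V : finType) (P : {set V}) :
  P \in edges (@neq V) -> exists u v, P = [set u; v] /\ u != v.
Proof.
by case/imset2P => x y _; rewrite inE => h ->; exists x, y.
Qed.

Lemma vbc_disj (V : finType) (B : bc V) u : vbc B -> inb B u u = false.
Proof.
case: B => X Y /and4P [/eqP h _ _ _]; rewrite /inb /= orbb.
apply/negP => /andP [h1 h2].
have : u \in X :&: Y by rewrite inE h1 h2.
by rewrite h inE.
Qed.

Lemma vbc_neq (V : finType) (B : bc V) u v : vbc B -> inb B u v -> u != v.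
Proof.
by move=> hB huv; apply/eqP => e; move: huv; rewrite e vbc_disj.
Qed.

Lemma inb_ne (V : finType) (B : bc V) u v : inb B u v -> (B.1 != set0) && (B.2 != set0).
Proof.
case/orP => /andP [h1 h2]; apply/andP; split; apply/set0Pn; eauto.
Qed.

Lemma inbC (V : finType) (B : bc V) u v : inb B u v = inb B v u.
Proof. by rewrite /inb orbC. Qed.

Lemma vbc_intro (V : finType) (B : bc V) : B.1 != set0 -> B.2 != set0 ->
  (forall x y, x \in B.1 -> y \in B.2 -> x != y) -> vbc B.
Proof.
case: B => X Y /= h1 h2 h; apply/and4P; split=> //=.
- apply/eqP/setP => x; rewrite !inE; apply/negP => /andP [hx hy].
  by move: (h x x hx hy); rewrite eqxx.
- apply/forallP => x; apply/implyP => hx; apply/forallP => y; apply/implyP => hy.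
  exact: h.
Qed.

Lemma vbc_elim (V : finType) (B : bc V) x y : vbc B -> x \in B.1 -> y \in B.2 -> x != y.
Proof.
case: B => X Y /and4P [_ _ _ /forallP h] /= hx hy.
by move: (h x); rewrite hx /= => /forallP /(_ y); rewrite hy.
Qed.

Definition epart (V : finType) (S : seq (bc V)) (P : V -> V -> bool) :=
  all (@vbc V) S /\ forall u v, u != v -> count (fun B => inb B u v) S = P u v.

Definition bpart (V W : finType) (L : seq (bc V * bc W)) (R : V -> V -> W -> W -> bool) :=
  all (fun B => vbc B.1 && vbc B.2) L /\
  forall u v w z, u != v -> w != z ->
    count (fun B => inb B.1 u v && inb B.2 w z) L = R u v w z.

Definition star (k i : nat) : bc 'I_k :=
  ([set j : 'I_k | val j == i], [set j : 'I_k | i < val j]).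
Definition stars k := map (star k) (iota 0 k.-1).

Lemma size_stars k : size (stars k) = k.-1.
Proof. by rewrite size_map size_iota. Qed.

Lemma epart_stars k : epart (stars k) (fun _ _ => true).
Proof.
split.
- apply/allP => B /mapP [i]; rewrite mem_iota add0n => /andP [_ hi] ->.
  have hik : i < k by lia.
  have hk1 : k.-1 < k by lia.
  apply: vbc_intro => /=.
  + by apply/set0Pn; exists (Ordinal hik); rewrite inE.
  + by apply/set0Pn; exists (Ordinal hk1); rewrite inE.
  + move=> x y; rewrite !inE => /eqP hx hy; apply/eqP => e.
    by move: hy; rewrite -e hx ltnn.
- move=> u v.
  wlog huv : u v / val u < val v.
    move=> W huv0; case: (ltngtP (val u) (val v)) => h.
    + exact: W.
    + rewrite (eq_count (a2 := fun B => inb B v u)); last by move=> B; rewrite inbC.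
      by apply: W => //; rewrite eq_sym.
    + by move: huv0; rewrite (val_inj h) eqxx.
  move=> _; rewrite /stars count_map.
  rewrite (eq_count (a2 := pred1 (val u))); last first.
    move=> i /=; rewrite /inb /= !inE.
    case: (eqVneq (val u) i) => [<-|ne] /=; first by rewrite huv.
    case: (eqVneq (val v) i) => [e|] //=.
    by rewrite -e ltnNge ltnW.
  rewrite count_uniq_mem ?iota_uniq // mem_iota add0n /=.
  have := ltn_ord v; case: k u v huv => // k u v huv hv /=.
  suff -> : (val u < k) = true by []; exact: leq_trans huv hv.
Qed.

Definition pbc (V U : finType) (D : pred V) (f : V -> U) (B : bc U) : bc V :=
  ([set v | D v && (f v \in B.1)], [set v | D v && (f v \in B.2)]).
Definition nebc (V : finType) (B : bc V) := (B.1 != set0) && (B.2 != set0).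
Definition pullS (V U : finType) (D : pred V) (f : V -> U) (S : seq (bc U)) : seq (bc V) :=
  filter (@nebc V) (map (pbc D f) S).

Lemma inb_pbc (V U : finType) (D : pred V) (f : V -> U) B u v :
  inb (pbc D f B) u v = D u && D v && inb B (f u) (f v).
Proof.
rewrite /inb /= !inE; case: (D u); case: (D v) => //=; by rewrite ?andbF.
Qed.

Lemma vbc_pbc (V U : finType) (D : pred V) (f : V -> U) B :
  vbc B -> nebc (pbc D f B) -> vbc (pbc D f B).
Proof.
move=> hB /andP [h1 h2]; apply: vbc_intro => // x y; rewrite !inE.
move=> /andP [_ hx] /andP [_ hy]; apply/eqP => e; move: (vbc_elim hB hx hy).
by rewrite e eqxx.
Qed.

Lemma size_pullS (V U : finType) (D : pred V) (f : V -> U) S :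
  size (pullS D f S) <= size S.
Proof. by rewrite /pullS size_filter -(size_map (pbc D f)) count_size. Qed.

Lemma epart_pull (V U : finType) (D : pred V) (f : V -> U) S P : epart S P ->
  epart (pullS D f S) (fun u v => D u && D v && (f u != f v) && P (f u) (f v)).
Proof.
move=> [hv hc]; split.
- apply/allP => B; rewrite mem_filter => /andP [hne /mapP [B0 hB0 e]].
  by rewrite e in hne *; apply: vbc_pbc => //; apply: (allP hv).
- move=> u v huv; rewrite /pullS count_filter.
  rewrite (eq_count (a2 := fun B => inb B u v)); last first.
    by move=> B /=; case h: (inb B u v) => //=; exact: (inb_ne h).
  rewrite count_map (eq_count (a2 := fun B => D u && D v && inb B (f u) (f v)));
    last by move=> B; rewrite /= inb_pbc.
  case: (D u && D v) => /=; last by rewrite count_pred0.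
  case: (eqVneq (f u) (f v)) => [e|ne] /=; last exact: hc.
  rewrite (eq_in_count (a2 := pred0)) ?count_pred0 // => B hB /=.
  by rewrite e vbc_disj //; apply: (allP hv).
Qed.

Lemma count_flat_fam (I : finType) (T : Type) (S : I -> seq T) (a : pred T) :
  count a (flatten [seq S i | i <- enum I]) = \sum_i count a (S i).
Proof.
rewrite count_flatten -map_comp sumnE big_map.
by rewrite big_enum.
Qed.

Lemma size_flat_fam (I : finType) (T : Type) (S : I -> seq T) :
  size (flatten [seq S i | i <- enum I]) = \sum_i size (S i).
Proof.
rewrite size_flatten /shape -map_comp sumnE big_map.
by rewrite big_enum.
Qed.

Lemma epart_flat (V I : finType) (S : I -> seq (bc V)) (P : I -> V -> V -> bool) (Q : V -> V -> bool) :
  (forall i, epart (S i) (P i)) -> (forall u v, u != v -> \sum_i P i u v = Q u v) ->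
  epart (flatten [seq S i | i <- enum I]) Q.
Proof.
move=> hS hQ; split.
- apply/allP => B /flattenP [s /mapP [i _ ->]] hB.
  by case: (hS i) => /allP h _; apply: h.
- move=> u v huv; rewrite count_flat_fam -hQ //.
  by apply: eq_bigr => i _; case: (hS i) => _ ->.
Qed.

Lemma bpart_flat (V W I : finType) (S : I -> seq (bc V * bc W)) (P : I -> V -> V -> W -> W -> bool) (Q : V -> V -> W -> W -> bool) :
  (forall i, bpart (S i) (P i)) ->
  (forall u v w z, u != v -> w != z -> \sum_i P i u v w z = Q u v w z) ->
  bpart (flatten [seq S i | i <- enum I]) Q.
Proof.
move=> hS hQ; split.
- apply/allP => B /flattenP [s /mapP [i _ ->]] hB.
  by case: (hS i) => /allP h _; apply: h.
- move=> u v w z huv hwz; rewrite count_flat_fam -hQ //.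
  by apply: eq_bigr => i _; case: (hS i) => _ ->.
Qed.

Lemma bpart_cat (V W : finType) L1 L2 (R1 R2 R : V -> V -> W -> W -> bool) :
  bpart L1 R1 -> bpart L2 R2 ->
  (forall u v w z, u != v -> w != z -> R1 u v w z + R2 u v w z = R u v w z) ->
  bpart (L1 ++ L2) R.
Proof.
move=> [h1 c1] [h2 c2] hR; split; first by rewrite all_cat h1 h2.
by move=> u v w z huv hwz; rewrite count_cat c1 // c2 // hR.
Qed.

Lemma bpart_prod (V W : finType) (S1 : seq (bc V)) (S2 : seq (bc W)) P1 P2 :
  epart S1 P1 -> epart S2 P2 ->
  bpart [seq (x, y) | x <- S1, y <- S2] (fun u v w z => P1 u v && P2 w z).
Proof.
move=> [h1 c1] [h2 c2]; split.
- apply/allP => B /allpairsP [[x y] [/= hx hy ->]] /=.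
  by rewrite (allP h1 x hx) (allP h2 y hy).
- move=> u v w z huv hwz; rewrite -mulnb -(c1 u v huv) -(c2 w z hwz).
  elim: S1 {h1 c1} => //= x S1 IH.
  rewrite count_cat IH count_map mulnDl; congr (_ + _).
  case hx: (inb x u v) => /=.
  - by rewrite mul1n; apply: eq_count => y /=; rewrite hx.
  - by rewrite mul0n; apply/eqP; rewrite -leqn0 leqNgt -has_count; apply/hasP => [[y _]] /=; rewrite hx.
Qed.

Definition pullB (V W U U' : finType) (D : pred V) (f : V -> U) (D' : pred W) (f' : W -> U')
  (L : seq (bc U * bc U')) : seq (bc V * bc W) :=
  filter (fun B => nebc B.1 && nebc B.2) (map (fun B => (pbc D f B.1, pbc D' f' B.2)) L).

Lemma size_pullB (V W U U' : finType) (D : pred V) (f : V -> U) (D' : pred W) (f' : W -> U') L :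
  size (pullB D f D' f' L) <= size L.
Proof. by rewrite /pullB size_filter -(size_map (fun B => (pbc D f B.1, pbc D' f' B.2))) count_size. Qed.

Lemma bpart_pull (V W U U' : finType) (D : pred V) (f : V -> U) (D' : pred W) (f' : W -> U') L R :
  bpart L R ->
  bpart (pullB D f D' f' L) (fun u v w z => D u && D v && D' w && D' z &&
     (f u != f v) && (f' w != f' z) && R (f u) (f v) (f' w) (f' z)).
Proof.
move=> [hv hc]; split.
- apply/allP => B; rewrite mem_filter => /andP [/andP [hn1 hn2] /mapP [B0 hB0 e]].
  rewrite e in hn1 hn2 *; case/andP: (allP hv B0 hB0) => hb1 hb2 /=.
  by rewrite !vbc_pbc.
- move=> u v w z huv hwz; rewrite /pullB count_filter.
  rewrite (eq_count (a2 := fun B => inb B.1 u v && inb B.2 w z)); last first.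
    move=> B /=; case h1: (inb B.1 u v); case h2: (inb B.2 w z); rewrite ?andbF //=.
    by rewrite /nebc (inb_ne h1) (inb_ne h2).
  rewrite count_map.
  rewrite (eq_count (a2 := fun B => (D u && D v && D' w && D' z) &&
     (inb B.1 (f u) (f v) && inb B.2 (f' w) (f' z)))); last first.
    move=> B /=; rewrite !inb_pbc.
    by case: (D u); case: (D v); case: (D' w); case: (D' z); rewrite /= ?andbF.
  case: (D u && D v && D' w && D' z) => /=; last by elim: L {hv hc} => //= ? ? ->.
  case: (eqVneq (f u) (f v)) => [e|ne] /=.
    rewrite (eq_in_count (a2 := pred0)) ?count_pred0 // => B hB /=.
    by rewrite e vbc_disj //; case/andP: (allP hv B hB).
  case: (eqVneq (f' w) (f' z)) => [e|ne'] /=; last exact: hc.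
  rewrite (eq_in_count (a2 := pred0)) ?count_pred0 // => B hB /=.
  by rewrite e (vbc_disj (B := B.2)) ?andbF //; case/andP: (allP hv B hB).
Qed.

Lemma mem_cbs' (V : finType) (B : bc V) (u v : V) :
  ([set u; v] \in cbs_edges B) = inb B u v.
Proof. by case: B => X Y; rewrite mem_cbs. Qed.

Lemma count_two (T : eqType) (x0 : T) (a : pred T) (s : seq T) i j :
  i < size s -> j < size s -> i != j -> a (nth x0 s i) -> a (nth x0 s j) -> 1 < count a s.
Proof.
elim: s i j => //= x s IH [|i] [|j] //= hi hj hij hai haj.
- have : 0 < count a s by rewrite -has_count; apply/hasP; exists (nth x0 s j) => //; apply: mem_nth.
  by rewrite hai; lia.
- have : 0 < count a s by rewrite -has_count; apply/hasP; exists (nth x0 s i) => //; apply: mem_nth.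
  by rewrite haj; lia.
- by have := IH i j hi hj hij hai haj; lia.
Qed.

Lemma bpart_decomp (V W : finType) (L : seq (bc V * bc W)) :
  bpart L (fun _ _ _ _ => true) -> decomp (@neq V) (@neq W) (size L).
Proof.
move=> [hv hc].
pose B0 : bc V * bc W := ((set0, set0), (set0, set0)).
apply/existsP; exists [ffun i : 'I_(size L) => nth B0 L i].
apply/and3P; split.
- apply/forallP => i; rewrite ffunE.
  by move/all_nthP: hv => /(_ B0 i (ltn_ord i)).
- apply/forallP => i; apply/forallP => j; apply/implyP => hij.
  apply/eqP/setP => [[P1 P2]]; rewrite inE [(P1, P2) \in set0]inE !ffunE /block !in_setX.
  apply/negP => /andP [/andP [h1 h2] /andP [h3 h4]].
  case/cbs_edgesP: h1 => u [v [e1 i1]]; case/cbs_edgesP: h2 => w [z [e2 i2]].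
  rewrite e1 mem_cbs' in h3; rewrite e2 mem_cbs' in h4.
  have hvi := all_nthP B0 hv i (ltn_ord i); case/andP: hvi => hv1 hv2.
  have := hc u v w z (vbc_neq hv1 i1) (vbc_neq hv2 i2).
  move/eqP; apply/negP; rewrite neq_ltn; apply/orP; right.
  apply: (count_two (x0 := B0) (ltn_ord i) (ltn_ord j) hij) => /=.
  + by rewrite i1 i2.
  + by rewrite h3 h4.
- apply/eqP/setP => [[P1 P2]]; apply/bigcupP/idP.
  + case=> i _; rewrite ffunE /block in_setX => /andP [h1 h2].
    have hvi := all_nthP B0 hv i (ltn_ord i); case/andP: hvi => hv1 hv2.
    case/cbs_edgesP: h1 => u [v [e1 i1]]; case/cbs_edgesP: h2 => w [z [e2 i2]].
    by rewrite in_setX e1 e2 !mem_edges (vbc_neq hv1 i1) (vbc_neq hv2 i2).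
  + rewrite in_setX => /andP [/edgesP [u [v [e1 n1]]] /edgesP [w [z [e2 n2]]]].
    have := hc u v w z n1 n2 => /= hcnt.
    have : has (fun B => inb B.1 u v && inb B.2 w z) L by rewrite has_count hcnt.
    case/hasP => B hB /andP [i1 i2].
    have hi : index B L < size L by rewrite index_mem.
    exists (Ordinal hi) => //.
    by rewrite ffunE /= nth_index // /block in_setX e1 e2 !mem_cbs' i1 i2.
Qed.

Lemma decomp_bpart (V W : finType) k : decomp (@neq V) (@neq W) k ->
  exists L : seq (bc V * bc W), size L = k /\ bpart L (fun _ _ _ _ => true).
Proof.
case/existsP => f /and3P [/forallP hv /forallP hd /eqP hu].
exists [seq f i | i <- enum 'I_k]; split; first by rewrite size_map size_enum_ord.
split.
- by apply/allP => B /mapP [i _ ->]; apply: hv.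
- move=> u v w z huv hwz; rewrite count_map.
  pose p := ([set u; v], [set w; z]).
  have : p \in setX (edges (@neq V)) (edges (@neq W)) by rewrite in_setX !mem_edges huv hwz.
  rewrite -hu => /bigcupP [i _ hi].
  rewrite (eq_count (a2 := pred1 i)); first by rewrite count_uniq_mem ?enum_uniq ?mem_enum.
  move=> j /=; rewrite -[inb _ u v]mem_cbs' -[inb _ w z]mem_cbs'.
  have -> : ([set u; v] \in cbs_edges (f j).1) && ([set w; z] \in cbs_edges (f j).2) = (p \in block (f j))
    by rewrite /block in_setX.
  apply/idP/eqP => [hj|->//].
  apply/eqP; apply/negP => /negP nij.
  move: (hd j) => /forallP /(_ i); rewrite nij /= => /eqP /setP /(_ p).
  by rewrite inE hi hj inE.
Qed.

Lemma gGH_le (V W : finType) (eV : rel V) (eW : rel W) k : decomp eV eW k -> gGH eV eW <= k.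
Proof.
move=> hd; rewrite /gGH.
set s := iota 0 _.
case: (ltnP k (size s)) => h.
- rewrite leqNgt; apply/negP => hk; have := before_find 0 hk.
  rewrite /s nth_iota; [by rewrite add0n hd | by move: h; rewrite size_iota].
- by apply: leq_trans h; apply: find_size.
Qed.

Lemma gGH_spec (V W : finType) (eV : rel V) (eW : rel W) :
  gGH eV eW <= #|edges eV| * #|edges eW| -> decomp eV eW (gGH eV eW).
Proof.
rewrite /gGH => h.
have hs : find (decomp eV eW) (iota 0 (#|edges eV| * #|edges eW|).+1) <
          size (iota 0 (#|edges eV| * #|edges eW|).+1) by rewrite size_iota ltnS.
have := nth_find 0 (introT (b := has _ _) idP (etrans (has_find _ _) hs)).
by rewrite nth_iota // -(size_iota 0) .
Qed.

Lemma card_edges_K (a : nat) : a.-1 <= #|edges (@neq 'I_a)|.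
Proof.
case: a => [|a] //=.
pose f := fun i : 'I_a => [set (ord0 : 'I_a.+1); lift ord0 i].
have finj : injective f.
  move=> i j /set2_eq [[_ /lift_inj //]|[e _]].
  by move: (neq_lift (ord0 : 'I_a.+1) j); rewrite -e eqxx.
have h : #|[set f i | i in 'I_a]| = a by rewrite card_imset // card_ord.
suff: #|[set f i | i in 'I_a]| <= #|edges (@neq 'I_a.+1)| by rewrite h.
apply: subset_leq_card; apply/subsetP => P /imsetP [i _ ->].
by rewrite /f mem_edges neq_lift.
Qed.

Lemma epart_ext (V : finType) S (P Q : V -> V -> bool) :
  epart S P -> (forall u v, u != v -> P u v = Q u v) -> epart S Q.
Proof. by move=> [h1 h2] e; split=> // u v huv; rewrite -e // h2. Qed.

Lemma bpart_ext (V W : finType) L (P Q : V -> V -> W -> W -> bool) :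
  bpart L P -> (forall u v w z, u != v -> w != z -> P u v w z = Q u v w z) -> bpart L Q.
Proof. by move=> [h1 h2] e; split=> // u v w z huv hwz; rewrite -e // h2. Qed.

Lemma sum_single (I : finType) (F : I -> nat) j :
  (forall i, i != j -> F i = 0) -> \sum_i F i = F j.
Proof. by move=> h; rewrite (bigD1 j) //= big1 ?addn0 // => i /h. Qed.

Definition fullS (V : finType) : seq (bc V) := pullS predT (@enum_rank V) (stars #|V|).

Lemma epart_full (V : finType) : epart (fullS V) (fun _ _ => true).
Proof.
apply: epart_ext; first exact: (epart_pull predT (@enum_rank V) (epart_stars #|V|)).
by move=> u v huv /=; rewrite (inj_eq enum_rank_inj) huv.
Qed.

Lemma size_full (V : finType) : size (fullS V) <= #|V|.-1.
Proof. by rewrite -(size_stars #|V|) size_pullS. Qed.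

Lemma size_flat_le (I : finType) (T : Type) (S : I -> seq T) k :
  (forall i, size (S i) <= k) -> size (flatten [seq S i | i <- enum I]) <= #|I| * k.
Proof.
move=> h; rewrite size_flat_fam -sum_nat_const.
by apply: leq_sum => i _; apply: h.
Qed.

Section Inner.
Variables (a b : nat) (L0 : seq (bc 'I_a * bc 'I_b)).
Hypothesis hL0 : bpart L0 (fun _ _ _ _ => true).
Let U := ('I_a * 'I_b)%type.

Definition Pxsame : seq (bc U) :=
  flatten [seq pullS (fun u : U => u.1 == i) snd (stars b) | i <- enum 'I_a].
Definition Pxdiff : seq (bc U) := pullS predT fst (stars a).
Definition Pysame : seq (bc U) :=
  flatten [seq pullS (fun u : U => u.2 == j) fst (stars a) | j <- enum 'I_b].
Definition DU : seq (bc U * bc U) :=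
  pullB predT fst predT snd L0 ++ ([seq (x, y) | x <- Pxsame, y <- fullS U] ++
                                   [seq (x, y) | x <- Pxdiff, y <- Pysame]).

Lemma pair_neq (X Y : eqType) (u v : X * Y) : u != v -> u.1 == v.1 -> u.2 != v.2.
Proof.
case: u v => x y [x' y'] /= ne /eqP e; subst; apply: contra ne => /eqP ->; by [].
Qed.

Lemma epart_Pxsame : epart Pxsame (fun u v => u.1 == v.1).
Proof.
apply: epart_flat => [i|u v huv].
  exact: (epart_pull (fun u : U => u.1 == i) snd (epart_stars b)).
rewrite (sum_single (j := u.1)) => [|i ne]; last by rewrite eq_sym (negPf ne).
rewrite eqxx /= eq_sym andbT; case: (eqVneq v.1 u.1) => //= e.
by rewrite (pair_neq huv) // e.
Qed.

Lemma epart_Pysame : epart Pysame (fun u v => u.2 == v.2).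
Proof.
apply: epart_flat => [i|u v huv].
  exact: (epart_pull (fun u : U => u.2 == i) fst (epart_stars a)).
rewrite (sum_single (j := u.2)) => [|i ne]; last by rewrite eq_sym (negPf ne).
rewrite eqxx /= eq_sym andbT; case: (eqVneq v.2 u.2) => //= e.
have h : (u.2, u.1) != (v.2, v.1).
  by apply: contra huv; case: u v {e} => [? ?] [? ?] /= /eqP [-> ->].
by rewrite (pair_neq h) // e.
Qed.

Lemma epart_Pxdiff : epart Pxdiff (fun u v => u.1 != v.1).
Proof.
apply: epart_ext; first exact: (epart_pull predT fst (epart_stars a)).
by move=> u v _ /=; rewrite andbT.
Qed.

Lemma bpart_DU : bpart DU (fun _ _ _ _ => true).
Proof.
apply: bpart_cat.
- exact: (bpart_pull predT fst predT snd hL0).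
- apply: (bpart_cat (R := fun (u v : U) (w z : U) => (u.1 == v.1) || (w.2 == z.2))).
  + exact: (bpart_prod epart_Pxsame (epart_full U)).
  + exact: (bpart_prod epart_Pxdiff epart_Pysame).
  + move=> u v w z _ _ /=; rewrite andbT.
    by case: (u.1 == v.1); case: (w.2 == z.2).
- move=> u v w z _ _ /=; rewrite andbT.
  by case: (u.1 == v.1); case: (w.2 == z.2).
Qed.

Lemma size_DU : size DU <= size L0 + a * b.-1 * (a * b).-1 + a.-1 * (b * a.-1).
Proof.
rewrite /DU !size_cat !size_allpairs.
rewrite -addnA; apply: leq_add; first exact: size_pullB.
apply: leq_add; apply: leq_mul.
- rewrite /Pxsame; apply: leq_trans (@size_flat_le _ _ (fun i => pullS (fun u : U => u.1 == i) snd (stars b)) b.-1 _) _.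
    by move=> i; rewrite -(size_stars b); exact: size_pullS.
  by rewrite card_ord.
- by have := size_full U; rewrite card_prod !card_ord.
- by rewrite /Pxdiff -(size_stars a); exact: size_pullS.
- rewrite /Pysame; apply: leq_trans (@size_flat_le _ _ (fun j => pullS (fun u : U => u.2 == j) fst (stars a)) a.-1 _) _.
    by move=> i; rewrite -(size_stars a); exact: size_pullS.
  by rewrite card_ord.
Qed.
End Inner.

Lemma num2 m A s : 1 <= m -> 1 <= A -> s + 1 <= A.-1 * A.-1 ->
  m.-1 * (m * A).-1 + m * A.-1 * m.-1 + m * m * s + m * m <= (m * A) * (m * A).
Proof.
case: m => [|x] //; case: A => [|y] // _ _ /= hs.
have := leq_mul (leqnn (x.+1 * x.+1)) hs.
nia.
Qed.
Lemma num3 n K : n <= K -> K * (n.-1 * n.-1) <= K.-1 * (n * n).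
Proof.
case: n => [|x] //; case: K => [|k] // h /=.
have := leq_mul h (leqnn x).
nia.
Qed.
Lemma num4 n A m s : 4 <= A -> n <= m * A -> m * A <= n + A -> 4 * A ^ 3 < n ->
  s + m * m <= (m * A) * (m * A) -> 4 * A ^ 3 * s <= (4 * A ^ 3).-1 * (n * n).
Proof.
move=> hA h1 h2 hn hs.
set K := 4 * A ^ 3.
set t := m * A.
have e : K * (m * m) = 4 * A * (t * t) by rewrite /K /t; nia.
have f1 : K * s + 4 * A * (t * t) <= K * (t * t).
  by rewrite -e -mulnDr; apply: leq_mul.
have f2 : K * (t * t) <= K * ((n + A) * (n + A)) by apply: leq_mul => //; apply: leq_mul.
have f3 : 4 * A * (n * n) <= 4 * A * (t * t) by apply: leq_mul => //; apply: leq_mul.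
have f4 : 3 * A * (n * K) <= 3 * A * (n * n) by apply: leq_mul => //; apply: leq_mul => //; apply: ltnW.
have hAn : A <= n by apply: leq_trans (ltnW hn); rewrite /K; nia.
have f5 : 4 * A ^ 4 * A <= 4 * A ^ 4 * n by apply: leq_mul.
have f6 : 1 * (n * n) <= A * (n * n) by apply: leq_mul => //; apply: leq_trans hA.
have hK1 : 1 <= K by rewrite /K; nia.
suff : K * s + n * n <= K * (n * n).
  case: K hK1 f1 f2 f4 {e} => [|k] //= _ _ _ _; lia.
rewrite /K in f1 f2 f4 *.
nia.
Qed.
Lemma num1 a b c : 2 <= a -> 2 <= b -> c < a.-1 * b.-1 ->
  c + a * b.-1 * (a * b).-1 + a.-1 * (b * a.-1) + 1 <= (a * b).-1 * (a * b).-1.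
Proof.
case: a => [|[|x]] //; case: b => [|[|y]] // _ _.
have -> : (x.+2 * y.+2).-1 = x.+2 * y.+2 - 1 by rewrite subn1.
rewrite /=. nia.
Qed.

Section Outer.
Variables (m a b : nat) (L0 : seq (bc 'I_a * bc 'I_b)).
Hypothesis hL0 : bpart L0 (fun _ _ _ _ => true).
Let U := ('I_a * 'I_b)%type.
Let T := ('I_m * U)%type.

Definition Pqdiff : seq (bc T) := pullS predT fst (stars m).
Definition Pqsame : seq (bc T) :=
  flatten [seq pullS (fun u : T => u.1 == i) snd (fullS U) | i <- enum 'I_m].
Definition Fam : seq (bc T * bc T) :=
  flatten [seq pullB (fun u : T => u.1 == p.1) snd (fun w : T => w.1 == p.2) snd (DU L0)
          | p <- enum {: 'I_m * 'I_m}].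
Definition DT : seq (bc T * bc T) :=
  [seq (x, y) | x <- Pqdiff, y <- fullS T] ++ ([seq (x, y) | x <- Pqsame, y <- Pqdiff] ++ Fam).

Lemma epart_Pqdiff : epart Pqdiff (fun u v => u.1 != v.1).
Proof.
apply: epart_ext; first exact: (epart_pull predT fst (epart_stars m)).
by move=> u v _ /=; rewrite andbT.
Qed.

Lemma epart_Pqsame : epart Pqsame (fun u v => u.1 == v.1).
Proof.
apply: epart_flat => [i|u v huv].
  exact: (epart_pull (fun u : T => u.1 == i) snd (epart_full U)).
rewrite (sum_single (j := u.1)) => [|i ne]; last by rewrite eq_sym (negPf ne).
rewrite eqxx /= eq_sym andbT; case: (eqVneq v.1 u.1) => //= e.
by rewrite (pair_neq huv) // e.
Qed.

Lemma bpart_Fam : bpart Fam (fun u v w z => (u.1 == v.1) && (w.1 == z.1)).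
Proof.
apply: bpart_flat => [p|u v w z huv hwz].
  exact: (bpart_pull (fun u : T => u.1 == p.1) snd (fun w : T => w.1 == p.2) snd (bpart_DU hL0)).
rewrite (sum_single (j := (u.1, w.1))) => [|[i1 i2] ne] /=.
- rewrite !eqxx /= andbT [v.1 == u.1]eq_sym [z.1 == w.1]eq_sym.
  case: (eqVneq u.1 v.1) => e1; case: (eqVneq w.1 z.1) => e2 //=.
  by rewrite (pair_neq huv) ?e1 // (pair_neq hwz) ?e2.
- have : ~~ ((u.1 == i1) && (w.1 == i2)).
    by apply: contra ne => /andP [/eqP <- /eqP <-].
  by case: (u.1 == i1); case: (w.1 == i2) => //=; rewrite ?andbF.
Qed.

Lemma bpart_DT : bpart DT (fun _ _ _ _ => true).
Proof.
apply: (bpart_cat (R1 := fun (u v : T) (w z : T) => (u.1 != v.1) && true)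
    (R2 := fun (u v : T) (w z : T) => u.1 == v.1)).
- exact: (bpart_prod epart_Pqdiff (epart_full T)).
- apply: (bpart_cat (R1 := fun (u v : T) (w z : T) => (u.1 == v.1) && (w.1 != z.1))).
  + exact: (bpart_prod epart_Pqsame epart_Pqdiff).
  + exact: bpart_Fam.
  + move=> u v w z _ _ /=.
    by case: (u.1 == v.1); case: (w.1 == z.1).
- move=> u v w z _ _ /=; rewrite andbT.
  by case: (u.1 == v.1).
Qed.

Lemma size_DT : size DT <= m.-1 * (m * (a * b)).-1 + m * (a * b).-1 * m.-1 + m * m * size (DU L0).
Proof.
rewrite /DT size_cat [size (_ ++ Fam)]size_cat (size_allpairs pair Pqdiff) (size_allpairs pair Pqsame) addnA.
apply: leq_add; [apply: leq_add; apply: leq_mul | ].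
- by rewrite /Pqdiff -(size_stars m); exact: size_pullS.
- by have := size_full T; rewrite !card_prod !card_ord.
- rewrite /Pqsame; apply: leq_trans (@size_flat_le _ _ (fun i => pullS (fun u : T => u.1 == i) snd (fullS U)) (a * b).-1 _) _.
    move=> i; apply: leq_trans (size_pullS _ _ _) _.
    by have := size_full U; rewrite !card_prod !card_ord.
  by rewrite card_ord.
- by rewrite /Pqdiff -(size_stars m); exact: size_pullS.
- rewrite /Fam size_flat_fam.
  apply: leq_trans (_ : _ <= \sum_(p : 'I_m * 'I_m) size (DU L0)) _.
    by apply: leq_sum => p _; apply: size_pullB.
  by rewrite sum_nat_const card_prod card_ord.
Qed.

Lemma g_le_DT n : n <= m * (a * b) -> g n <= size DT.
Proof.
move=> hn.
have h : n <= #|{: T}| by rewrite /T !card_prod !card_ord.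
pose f := fun u : 'I_n => (enum_val (widen_ord h u) : T).
have finj : injective f.
  by move=> x y /enum_val_inj /(congr1 val) /= /val_inj.
have hb := bpart_pull predT f predT f bpart_DT.
have hb' : bpart (pullB predT f predT f DT) (fun _ _ _ _ => true).
  apply: (bpart_ext hb) => u v w z huv hwz /=.
  by rewrite !(inj_eq finj) huv hwz.
apply: leq_trans (size_pullB predT f predT f DT).
exact: (gGH_le (bpart_decomp hb')).
Qed.
End Outer.

Lemma g_triv n : g n <= n.-1 * n.-1.
Proof.
have hb : bpart [seq (x, y) | x <- stars n, y <- stars n] (fun _ _ _ _ => true).
  exact: (bpart_ext (bpart_prod (epart_stars n) (epart_stars n))) => *.
have := gGH_le (bpart_decomp hb).
by rewrite size_allpairs size_stars.
Qed.

Import Order.TTheory GRing.Theory Num.Theory.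

Lemma key_bound (a b : nat) :
  (0 < a)%N -> (0 < b)%N -> (gK a b < (a - 1) * (b - 1))%N ->
  forall n, (4 * (a * b) ^ 3 * g n <= (4 * (a * b) ^ 3).-1 * (n * n))%N.
Proof.
move=> ha hb hg.
have hpos : (0 < (a - 1) * (b - 1))%N by apply: leq_ltn_trans (leq0n _) hg.
have [ha2 hb2] : (2 <= a)%N /\ (2 <= b)%N.
  by move: hpos; rewrite muln_gt0 => /andP [h1 h2]; split; lia.
have hle : (gK a b <= #|edges (@neq 'I_a)| * #|edges (@neq 'I_b)|)%N.
  apply: leq_trans (ltnW hg) _; rewrite !subn1; apply: leq_mul; apply: card_edges_K.
have hd : decomp (@neq 'I_a) (@neq 'I_b) (gK a b) := gGH_spec hle.
case: (decomp_bpart hd) => L0 [hs hL0].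
have hA : (4 <= a * b)%N by nia.
move=> n; case: (leqP n (4 * (a * b) ^ 3)) => hnK.
- apply: leq_trans _ (num3 hnK); apply: leq_mul (leqnn _) (g_triv n).
- set m := (n %/ (a * b)).+1.
  have hA0 : (0 < a * b)%N by lia.
  have e := divn_eq n (a * b).
  have hr := ltn_pmod n hA0.
  have h1 : (n <= m * (a * b))%N by rewrite /m mulSn; lia.
  have h2 : (m * (a * b) <= n + a * b)%N by rewrite /m mulSn; lia.
  have hU : (size (DU L0) + 1 <= (a * b).-1 * (a * b).-1)%N.
    apply: leq_trans (num1 ha2 hb2 (c := size L0) _).
      by rewrite leq_add2r; apply: size_DU.
    by rewrite hs -!subn1.
  have hT := num2 (m := m) (ltn0Sn _) hA0 hU.
  have hD := size_DT m L0.
  have hg' := g_le_DT (m := m) hL0 h1.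
  apply: (num4 hA h1 h2 hnK).
  apply: leq_trans hT; rewrite leq_add2r.
  by apply: leq_trans hg' _; apply: leq_trans hD _.
Qed.

Local Open Scope ring_scope.

Theorem mainTheorem4 (a b : nat) :
  (0 < a)%N -> (0 < b)%N -> (gK a b < (a - 1) * (b - 1))%N ->
  exists beta : rat, beta < 1 /\
    forall n : nat, (g n)%:R <= beta * (n%:R) ^+ 2.
Proof.
move=> ha hb hg.
have key := key_bound ha hb hg.
set K := (4 * (a * b) ^ 3)%N in key.
have hK : (0 < K)%N by rewrite /K muln_gt0 expn_gt0 muln_gt0 ha hb.
exists ((K.-1)%:R / K%:R); split.
- by rewrite ltr_pdivrMr ?ltr0n // mul1r ltr_nat ltn_predL.
- move=> n; rewrite mulrAC ler_pdivlMr ?ltr0n // -natrX -!natrM ler_nat.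
  by rewrite mulnC -mulnn; apply: key.
Qed.
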